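(* Let $n\ge2$, let $L_1,\dots,L_n$ be finite lists of reals, each sorted in nondecreasing order, and fix $0\le\tau_{min}\le\tau_{max}$. Let $\|D\|=\sum_{i=1}^n |L_i|$ be the total size of the data. Then Algorithm-Chain runs in $O(\|D\|)$ time.
   Context: A tuple of indices $(p_1,\dots,p_n)$, with values $x_i=L_i[p_i]$, is valid if $x_{i+1}-x_i\in[\tau_{min},\tau_{max}]$ for $i=1,\dots,n-1$. The same algorithm and bound apply to ordered siblings, with $[-\delta,\delta]$ in place of $[\tau_{min},\tau_{max}]$. Algorithm-Chain, which computes a maximum matching (a largest sequence of valid tuples whose indices strictly increase in every list), is implemented as follows: 1. Keep pointers $P_1,\dots,P_n$, initially at the first entries, and a current pair index $i$, initially $1$. Let $x_k=L_k[P_k]$. 2. While every pointer lies within its list, do one of the following: - If $x_{i+1}-x_i<\tau_{min}$, advance $P_{i+1}$. - Else if $x_{i+1}-x_i\in[\tau_{min},\tau_{max}]$: if $i+1=n$, record $(P_1,\dots,P_n)$ as the next matched tuple, advance every pointer by one, and set $i\gets1$; otherwise set $i\gets i+1$. - Else ($x_{i+1}-x_i>\tau_{max}$), advance $P_i$ and set $i\gets\max(i-1,1)$. Arithmetic operations, comparisons and pointer moves cost unit time. *)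

(* Defs.v *)
(* Indices are 0-based: lists L_1..L_n
   are (nth [::] L 0) .. (nth [::] L (n-1)), the pair index i ranges over
   0 .. n-2 (pair (i, i+1)). *)
From mathcomp Require Import all_boot all_order all_algebra.
Set Implicit Arguments. Unset Strict Implicit. Unset Printing Implicit Defensive.
Import Order.TTheory GRing.Theory Num.Theory.
Local Open Scope ring_scope.

Record chain_state := ChainState {
  cs_ptr : seq nat;
  cs_idx : nat;
  cs_out : seq (seq nat) }.

Section Chain.
Variable R : realDomainType.
Variables (L : seq (seq R)) (tmin tmax : R).

Definition chain_inbounds (P : seq nat) : bool :=
  all (fun k => (nth 0%N P k < size (nth [::] L k))%N) (iota 0 (size L)).

Definition chain_incr (k : nat) (P : seq nat) : seq nat :=
  set_nth 0%N P k (nth 0%N P k).+1.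

Definition chain_val (P : seq nat) (k : nat) : R :=
  nth 0 (nth [::] L k) (nth 0%N P k).

(* None = loop condition false (halt).
   Some (s', c): new state and cost c of this iteration, counted as one
   unit for the comparisons/arithmetic plus one unit per pointer move
   (1 move in the advance cases, n moves when all pointers are advanced;
   recording the n-tuple is charged to those n moves as well). *)
Definition chain_step (s : chain_state) : option (chain_state * nat) :=
  let P := cs_ptr s in
  let i := cs_idx s in
  if ~~ chain_inbounds P then None else
  let d := chain_val P i.+1 - chain_val P i in
  if d < tmin then
    Some (ChainState (chain_incr i.+1 P) i (cs_out s), 2%N)
  else if d <= tmax then
    (if i.+2 == size L then
       Some (ChainState (map S P) 0 (rcons (cs_out s) P), (1 + size L)%N)
     else Some (ChainState P i.+1 (cs_out s), 1%N))
  else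
    Some (ChainState (chain_incr i P) i.-1 (cs_out s), 2%N).

Fixpoint chain_run (fuel : nat) (s : chain_state) : option chain_state * nat :=
  match fuel with
  | 0 => (None, 0%N)
  | f.+1 =>
    match chain_step s with
    | None => (Some s, 0%N)
    | Some (s', c) => let r := chain_run f s' in (r.1, (c + r.2)%N)
    end
  end.

Definition chain_init : chain_state := ChainState (nseq (size L) 0%N) 0 [::].

End Chain.

Definition data_size (R : Type) (L : seq (seq R)) : nat := sumn (map size L).

(* Main.v *)
Require Import Defs.
From mathcomp Require Import all_boot all_order all_algebra.
From mathcomp Require Import zify.
Import Order.TTheory GRing.Theory Num.Theory.
Set Implicit Arguments. Unset Strict Implicit.
Local Open Scope ring_scope.

Lemma sumn_incr (P : seq nat) k : (k < size P)%N ->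
  sumn (set_nth 0%N P k (nth 0%N P k).+1) = (sumn P).+1.
Proof.
elim: P k => [|x P IH] [|k] //= Hk.
by rewrite IH // addnS.
Qed.

Lemma sumn_mapS (P : seq nat) : sumn (map S P) = (sumn P + size P)%N.
Proof. elim: P => //= x P IH; rewrite IH; lia. Qed.

Lemma sumn_le (T : Type) (L : seq (seq T)) (P : seq nat) :
  size P = size L ->
  (forall k, (k < size L)%N -> (nth 0%N P k <= size (nth [::] L k))%N) ->
  (sumn P <= sumn (map size L))%N.
Proof.
elim: L P => [|l L IH] [|x P] //= [] Hs H.
apply: leq_add; first exact: (H 0%N).
apply: IH => // k Hk; exact: (H k.+1).
Qed.

Section Proof.
Variable R : realDomainType.
Variables (L : seq (seq R)) (tmin tmax : R).

Definition Inv (s : chain_state) : Prop :=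
  [/\ size (cs_ptr s) = size L, ((cs_idx s).+1 < size L)%N &
      forall k, (k < size L)%N -> (nth 0%N (cs_ptr s) k <= size (nth [::] L k))%N].

Definition Phi (s : chain_state) : nat := (5 * sumn (cs_ptr s) + 2 * cs_idx s)%N.

Lemma Phi_le s : Inv s -> (Phi s <= 5 * data_size L + 2 * (size L).-2)%N.
Proof.
case=> Hsz Hi Hk; rewrite /Phi /data_size.
have := @sumn_le _ _ _ Hsz Hk; lia.
Qed.

Lemma inb_nth P : chain_inbounds L P ->
  forall k, (k < size L)%N -> (nth 0%N P k < size (nth [::] L k))%N.
Proof.
move=> /allP H k Hk; apply: (H k); by rewrite mem_iota.
Qed.

Lemma step_ok s s' c : Inv s -> chain_step L tmin tmax s = Some (s', c) ->
  Inv s' /\ (c + 1 + Phi s <= Phi s')%N.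
Proof.
case: s => P i o [/= Hs Hi Hk]; rewrite /chain_step /=.
case Hb: (chain_inbounds L P) => //=.
have Hn := inb_nth Hb.
have incr k : (k < size L)%N ->
   [/\ size (chain_incr k P) = size L,
       sumn (chain_incr k P) = (sumn P).+1 &
       forall j, (j < size L)%N ->
         (nth 0%N (chain_incr k P) j <= size (nth [::] L j))%N].
  move=> Hk'; split.
  - rewrite /chain_incr size_set_nth Hs; lia.
  - by rewrite /chain_incr sumn_incr // Hs.
  - move=> j Hj; rewrite /chain_incr nth_set_nth /=.
    case: eqP => [->|_]; [exact: Hn | exact: Hk].
case: ifP => _.
  case=> <- <-; have [A B C] := incr i.+1 Hi.
  split; first by split.
  rewrite /Phi /= B; lia.
case: ifP => _.
  case: ifP => /eqP Hi2.
    case=> <- <-; split.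
      split => //=; first by rewrite size_map.
      - lia.
      - move=> k Hk'; rewrite (nth_map 0%N); last by rewrite Hs.
        exact: Hn.
    rewrite /Phi /= sumn_mapS Hs; lia.
  case=> <- <-; split; first by split => //=; lia.
  rewrite /Phi /=; lia.
case=> <- <-; have [A B C] := incr i (ltnW Hi).
split; first by split => //=; lia.
rewrite /Phi /= B; lia.
Qed.

Lemma run_ok f s : Inv s ->
  ((chain_run L tmin tmax f s).2 + Phi s +
   (if (chain_run L tmin tmax f s).1 is None then f else 0)
   <= 5 * data_size L + 2 * (size L).-2)%N.
Proof.
elim: f s => [|f IH] s Hs /=.
  by rewrite add0n addn0; exact: Phi_le.
case Hst: (chain_step L tmin tmax s) => [[s' c]|] /=.
  have [Hs' Hc] := step_ok Hs Hst.
  have := IH s' Hs'.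
  case: (chain_run L tmin tmax f s').1 => /= [_|]; lia.
rewrite add0n addn0; exact: Phi_le.
Qed.

End Proof.

Theorem mainTheorem3 :
  exists C : nat,
  forall (R : realDomainType) (L : seq (seq R)) (tmin tmax : R),
    (2 <= size L)%N ->
    all (sorted <=%R) L ->
    0 <= tmin -> tmin <= tmax ->
    exists fuel : nat,
      isSome (chain_run L tmin tmax fuel (chain_init L)).1 /\
      ((chain_run L tmin tmax fuel (chain_init L)).2 <= C * data_size L)%N.
Proof.
exists 7%N => R L tmin tmax H2 _ _ _.
case Hb: (chain_inbounds L (nseq (size L) 0%N)).
  have Hinv : Inv L (chain_init L).
    split => //=; first by rewrite size_nseq.
    by move=> k Hk; rewrite nth_nseq Hk.
  have HD : (size L <= data_size L)%N.
    rewrite /data_size.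
    have : forall k, (k < size L)%N -> (0 < size (nth [::] L k))%N.
      move=> k Hk; have := inb_nth Hb Hk; by rewrite nth_nseq Hk.
    elim: (L) => //= l L' IH H; have := H 0%N isT => /= ?.
    have := IH (fun k Hk => H k.+1 Hk); lia.
  exists (5 * data_size L + 2 * (size L).-2).+1.
  have := run_ok tmin tmax (5 * data_size L + 2 * (size L).-2).+1 Hinv.
  case: (chain_run L tmin tmax _ (chain_init L)).1 => /= [_|] H; [split => //; lia | lia].
exists 1%N; by rewrite /= /chain_step Hb.
Qed.
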